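(* Let $K$ be a finite field with $q$ elements and let $\Psi(x)\in K[x]$ be a polynomial of degree $\deg\Psi\geqslant 1$. Then there exists an irreducible polynomial in $K[x]$ that is coprime to $\Psi$ and has degree $\leqslant \log_q(\deg\Psi)+1$.
   Context: $\log_q$ denotes the logarithm to base $q$. *)

(* Defs.v *)
From mathcomp Require Import all_boot all_algebra all_field.
From Stdlib Require Import Reals.
Set Implicit Arguments. Unset Strict Implicit. Unset Printing Implicit Defensive.

Definition logb (q x : R) : R := (ln x / ln q)%R.

(* Main.v *)
Require Import Defs.
From mathcomp Require Import all_boot all_algebra all_field.
From Stdlib Require Import Reals Lra.
Import GRing.Theory.

Section H.
Local Open Scope ring_scope.
Lemma card_nat0 (F : finFieldType) (L : fieldExtType F) (n : nat) : (0 < n)%nat ->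
  ((expn #|F| n)%:R : L) = 0.
Proof.
move=> n0.
have [p pr_p pcharFp] := finPcharP F.
have pL : p \in [pchar L] by rewrite pchar_lalg.
have := card_pprimeChar pcharFp => /= ->.
set k := logn _ _.
have k0 : (0 < k)%nat.
  case: (posnP k) => // k0.
  have := finNzRing_gt1 F; rewrite (card_pprimeChar pcharFp) -/k k0 //.
by rewrite -expnM natrX (pcharf0 pL) expr0n muln_eq0 eqn0Ngt k0 eqn0Ngt n0.
Qed.

Lemma ext_deg (F : finFieldType) (n : nat) : (0 < n)%nat ->
  exists L : splittingFieldType F, exists zs : seq L, uniq zs /\ size zs = (expn #|F| n) /\ (\dim {:L} <= n)%nat.
Proof.
move=> n_gt0.
set m := (expn #|F| n).
have F_gt1 := finNzRing_gt1 F.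
have m_gt1: (m > 1)%nat by rewrite /m (ltn_exp2l 0).
have m_gt0 := ltnW m_gt1; have m1_gt0: (m.-1 > 0)%nat by rewrite -ltnS prednK.
pose q (R : nzRingType) : {poly R} := 'X^m - 'X.
have Dq R: q R = ('X^(m.-1) - 1) * ('X - 0).
  by rewrite subr0 mulrBl mul1r -exprSr prednK.
have /FinSplittingFieldFor[/= L splitLq]: q F != 0.
  by rewrite Dq monic_neq0 ?rpredM ?monicXsubC ?monicXnsubC.
rewrite [map_poly _ _]rmorphB rmorphXn /= map_polyX -/(q L) in splitLq.
exists L.
have /finField_galois_generator[/= a _ Da]: (1 <= {:L})%VS by apply: sub1v.
pose Em := fixedSpace (a ^+ n)%g; rewrite dimv1 expn1 in Da.
have{splitLq} [zs DqL defL] := splitLq.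
have Uzs: uniq zs.
  rewrite -separable_prod_XsubC -(eqp_separable DqL) Dq separable_root andbC.
  rewrite /root !hornerE subr_eq0 eq_sym expr0n gtn_eqF ?oner_eq0 //=.
  rewrite cyclotomic.separable_Xn_sub_1 // -subn1 natrB // subr_eq0.
  by rewrite card_nat0 // eq_sym oner_eq0.
have szs : size zs = m.
  apply: succn_inj; rewrite -(size_prod_XsubC _ (fun x : L => x)).
  by rewrite -(eqp_size DqL) size_polyDl size_polyXn // size_polyN size_polyX.
exists zs; split => //; split => //.
have in_zs: zs =i Em.
  move=> z; rewrite -root_prod_XsubC -(eqp_root DqL) (sameP fixedSpaceP eqP).
  rewrite /root !hornerE subr_eq0 /= /m; congr (_ == z).
  elim: (n) => [|i IHi]; first by rewrite gal_id.
  by rewrite expgSr expnSr exprM IHi galM ?Da ?memvf.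
have defEm: Em = {:L}%VS.
  apply/eqP; rewrite eqEsubv subvf -defL -[Em]subfield_closed agenvS //.
  by rewrite subv_add sub1v; apply/span_subvP=> z; rewrite in_zs.
pose fL := finvect_type L.
have cL := card_vspace {:fL}%VS.
rewrite card_vspacef in cL.
have : (#|fL| <= m)%nat.
  rewrite -szs cardE; apply: (uniq_leq_size (enum_uniq fL)) => z _.
  by rewrite in_zs defEm memvf.
rewrite cL /m leq_exp2l //.
Qed.
End H.

Lemma expn_le_aux (q t d : nat) : (expn q t <= d)%nat -> le (Nat.pow q t) d.
Proof.
have E : Nat.pow q t = expn q t by elim: t => //= t IH; rewrite expnS IH.
by rewrite E => /ssrnat.leP.
Qed.

Section RP.
Local Open Scope R_scope.
Lemma real_part (q d t s : nat) : (1 < q)%nat -> (0 < d)%nat -> (expn q t <= d)%nat -> (s <= t.+1)%nat ->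
  (INR s <= logb (INR q) (INR d) + 1).
Proof.
move=> q1 d0 qt st.
have q0 : (0 < q)%nat := ltnW q1.
have q0R : 0 < INR q by apply: lt_0_INR; apply/ssrnat.ltP.
have lq : (0 < ln (INR q)).
  rewrite -ln_1; apply: ln_increasing; first lra.
  by apply: lt_1_INR; apply/ssrnat.ltP.
have h1 : (INR s <= INR t + 1) by rewrite -S_INR; apply: le_INR; apply/ssrnat.leP.
suff : (INR t <= logb (INR q) (INR d)) by lra.
rewrite /logb; apply: (Rmult_le_reg_r (ln (INR q))) => //.
rewrite /Rdiv Rmult_assoc Rinv_l ?Rmult_1_r; last lra.
rewrite -ln_pow //.
have hp : (0 < INR q ^ t).
  exact: pow_lt.
have : (INR q ^ t <= INR d) by rewrite -pow_INR; apply: le_INR; exact: expn_le_aux.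
case/Rle_lt_or_eq_dec => h; first by left; apply: ln_increasing.
by rewrite h; right.
Qed.
End RP.

Theorem lemma2 (K : finFieldType) (Psi : {poly K}) :
  (1 <= (size Psi).-1)%N ->
  exists P : {poly K},
    irreducible_poly P /\ coprimep P Psi /\
    (INR (size P).-1 <= logb (INR #|K|) (INR (size Psi).-1) + 1)%R.
Proof.
move=> hd.
Local Open Scope ring_scope.
set d := (size Psi).-1 in hd *.
have q1 := finNzRing_gt1 K.
set t := trunc_log #|K| d.
have [L [zs [Uzs [szs dimL]]]] := @ext_deg K t.+1 (ltn0Sn t).
pose psiL := map_poly (in_alg L) Psi.
have Psi0 : Psi != 0 by rewrite -size_poly_gt0; move: hd; rewrite /d; case: (size Psi).
have psiL0 : psiL != 0 by rewrite map_poly_eq0.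
have : ~~ all (root psiL) zs.
  apply/negP => allr; have := max_poly_roots psiL0 allr Uzs.
  rewrite szs size_map_poly.
  have := trunc_log_ltn d q1; rewrite -/t.
  have -> : size Psi = d.+1 by rewrite /d prednK // size_poly_gt0.
  by move=> h1 h2; have := leq_ltn_trans h1 h2; rewrite ltnn.
case/allPn => a za ra.
have /polyOver1P [P eP] := minPolyOver 1%AS a.
have szP : size P = size (minPoly 1%AS a) by rewrite eP size_map_poly.
have irrP : irreducible_poly P.
  split; first by rewrite szP size_minPoly.
  move=> Q sQ dQP.
  have : map_poly (in_alg L) Q \is a polyOver 1%VS by apply/polyOver1P; exists Q.
  move/(minPoly_irr (K := 1%AS) (x := a)); rewrite eP dvdp_map => /(_ dQP) /orP [|].
    by rewrite eqp_map.
  move/eqp_size; rewrite size_map_poly size_poly1 => h; by rewrite h in sQ.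
exists P; split => //; split.
  apply: contraR ra => nc.
  have : P %| Psi.
    have ng : size (gcdp P Psi) != 1 by exact: nc.
    have hg := irrP.2 _ ng (dvdp_gcdl P Psi).
    by rewrite -(eqp_dvdl _ hg) dvdp_gcdr.
  rewrite /psiL -(dvdp_map (in_alg L)) -eP => /dvdpP [r ->].
  by rewrite rootM root_minPoly orbT.
apply: (@real_part _ _ t) => //; first exact: trunc_logP.
rewrite szP size_minPoly /= adjoin_degreeE dimv1 divn1.
exact: leq_trans (dimvS (subvf _)) dimL.
Qed.
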